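(* Let $\mu>-1$, $\beta>0$, $N\ge1$, $Z\in\{G,R\}$, $\omega=x^\mu$. Let $\phi_1,\phi_2$ be real continuous functions on $[0,\infty)$ in $L^2_{x^\mu}(\mathbb R_+)$, $\phi=\phi_1\phi_2$, $\psi_i=\widehat I_{Z,N}^{(\mu,\beta)}\phi_i$ ($i=1,2$). Then $$\Bigl|\int_0^\infty\phi(x)x^\mu dx-\sum_{j=0}^N\phi\bigl(\xi^{(\mu,\beta)}_{Z,N,j}\bigr)\widehat\omega^{(\mu,\beta)}_{Z,N,j}\Bigr| \le\bigl(\|\phi_1\|_\omega+\|\phi_2\|_\omega+\|\psi_1\|_\omega+\|\psi_2\|_\omega\bigr)\bigl(\|\phi_1-\psi_1\|_\omega+\|\phi_2-\psi_2\|_\omega\bigr).$$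
   Context: $\|f\|_\omega=(\int_0^\infty|f|^2\omega)^{1/2}$; $P_K$ is the space of polynomials of degree at most $K$. $\mathscr L_n^{(\alpha)}$ is the generalized Laguerre polynomial (orthogonal on $(0,\infty)$ w.r.t. $x^\alpha e^{-x}$), $\widehat{\mathscr L}_n^{(\alpha)}(x)=e^{-x/2}\mathscr L_n^{(\alpha)}(x)$, and $\widehat P_N^{\beta,L}=\{e^{-\beta x/2}p:p\in P_N\}$. Laguerre–Gauss nodes $\xi^{(\mu,\beta)}_{G,N,j}$ ($0\le j\le N$) are the zeros of $\widehat{\mathscr L}^{(\mu)}_{N+1}(\beta x)$; Laguerre–Gauss–Radau nodes $\xi^{(\mu,\beta)}_{R,N,j}$ are the zeros of $x\,\widehat{\mathscr L}^{(\mu+1)}_{N}(\beta x)$. $\widehat I_{Z,N}^{(\mu,\beta)}v$ is the unique element of $\widehat P_N^{\beta,L}$ agreeing with $v$ at these nodes. The weights $\widehat\omega^{(\mu,\beta)}_{Z,N,j}$ are the numbers such that $\int_0^\infty\phi(x)x^\mu dx=\sum_{j}\phi(\xi^{(\mu,\beta)}_{Z,N,j})\widehat\omega^{(\mu,\beta)}_{Z,N,j}$ for all $\phi\in\{e^{-\beta x}p:p\in P_{2N+\lambda_Z}\}$, with $\lambda_G=1$, $\lambda_R=0$ (equivalently $\widehat\omega_{Z,N,j}=e^{\beta\xi_{Z,N,j}}\omega_{Z,N,j}$ where $\omega_{Z,N,j}$ are the Gauss, resp. Gauss–Radau, weights for the weight $x^\mu e^{-\beta x}$). *)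

(* Defs.v *)
From HB Require Import structures.
From mathcomp Require Import all_boot all_order all_algebra.
From mathcomp Require Import all_classical all_reals all_analysis.
Unset Printing Implicit Defensive.
Import Order.TTheory GRing.Theory Num.Theory.
Local Open Scope ring_scope.
Local Open Scope classical_set_scope.

(* Generalized Laguerre polynomials L_n^(alpha), via the standard three-term
   recurrence  L_0 = 1, L_1 = 1 + alpha - x,
   (n+2) L_{n+2} = (2n+3+alpha - x) L_{n+1} - (n+1+alpha) L_n.
   lag_pair alpha n = (L_n, L_{n+1}). *)
Fixpoint lag_pair {R : realType} (alpha : R) (n : nat) : {poly R} * {poly R} :=
  match n with
  | 0 => (1, (1 + alpha)%:P - 'X)
  | n'.+1 =>
      let (a, b) := lag_pair alpha n' in
      (b, (n'.+2%:R)^-1 *: ((((2 * n'%:R + 3 + alpha)%:P - 'X) * b)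
                            - (n'%:R + 1 + alpha) *: a))
  end.

Definition laguerre {R : realType} (n : nat) (alpha : R) : {poly R} :=
  (lag_pair alpha n).1.

Definition laguerre_hat {R : realType} (n : nat) (alpha : R) (x : R) : R :=
  expR (- x / 2) * (laguerre n alpha).[x].

Inductive quad_kind := Gauss | Radau.

Definition lambda_Z (Z : quad_kind) : nat :=
  match Z with Gauss => 1%N | Radau => 0%N end.

Definition node_fun {R : realType} (Z : quad_kind) (mu beta : R) (N : nat)
    (x : R) : R :=
  match Z with
  | Gauss => laguerre_hat N.+1 mu (beta * x)
  | Radau => x * laguerre_hat N (mu + 1) (beta * x)
  end.

Definition is_nodes {R : realType} (Z : quad_kind) (mu beta : R) (N : nat)
    (xi : 'I_N.+1 -> R) : Prop :=
  injective xi /\ (forall x : R, node_fun Z mu beta N x = 0 <-> exists j, xi j = x).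

Definition is_weights {R : realType} (Z : quad_kind) (mu beta : R) (N : nat)
    (xi w : 'I_N.+1 -> R) : Prop :=
  forall p : {poly R}, (size p <= (2 * N + lambda_Z Z).+1)%N ->
    Rintegral lebesgue_measure `]0, +oo[
      (fun x => expR (- beta * x) * p.[x] * x `^ mu)
    = \sum_(j < N.+1) expR (- beta * xi j) * p.[xi j] * w j.

Definition hat_fun {R : realType} (beta : R) (q : {poly R}) (x : R) : R :=
  expR (- beta * x / 2) * q.[x].

(* q represents \hat I_{Z,N}^{(mu,beta)} phi: q in P_N and e^{-beta x/2} q agrees
   with phi at the nodes (this determines q uniquely). *)
Definition is_interp {R : realType} (beta : R) (N : nat) (xi : 'I_N.+1 -> R)
    (phi : R -> R) (q : {poly R}) : Prop :=
  (size q <= N.+1)%N /\ forall j, hat_fun beta q (xi j) = phi (xi j).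

Definition wnorm {R : realType} (mu : R) (f : R -> R) : R :=
  Num.sqrt (Rintegral lebesgue_measure `]0, +oo[ (fun x => f x ^+ 2 * x `^ mu)).

Definition in_L2w {R : realType} (mu : R) (f : R -> R) : Prop :=
  measurable_fun (`]0, +oo[ : set R) f /\
  lebesgue_measure.-integrable `]0, +oo[ (fun x => (f x ^+ 2 * x `^ mu)%:E).

(* Main.v *)
Require Import Defs.
From HB Require Import structures.
From mathcomp Require Import all_boot all_order all_algebra.
From mathcomp Require Import all_classical all_reals all_analysis.
From mathcomp Require Import ring lra zify measurable_realfun.
Import Order.TTheory GRing.Theory Num.Theory.
Import numFieldNormedType.Exports.
Local Open Scope classical_set_scope.
Local Open Scope ring_scope.


Section S.
Variable R : realType.
Notation mu := (@lebesgue_measure R).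

Lemma powR_cont (m x : R) : 0 < x -> {for x, continuous (fun y : R => y `^ m)}.
Proof.
move=> x0; apply/differentiable_continuous; rewrite -derivable1_diffP.
by apply: derivable_powR; rewrite in_itv/= andbT.
Qed.

Lemma FTC_powR (m a : R) : -1 < m -> 0 < a -> a < 1 ->
  (\int[mu]_(x in `[a, 1%R]) (x `^ m)%:E = ((1 - a `^ (m+1)) / (m+1))%:E)%E.
Proof.
move=> m1 a0 a1.
have m10 : 0 < m + 1 by lra.
have dF : forall x, 0 < x -> derivable (fun x => (m+1)^-1 * x `^ (m+1)) x 1.
  move=> x x0; apply: derivableM => //.
  by apply: derivable_powR; rewrite in_itv/= andbT.
have cF : forall x, 0 < x -> {for x, continuous (fun x => (m+1)^-1 * x `^ (m+1))}.
  by move=> x x0; apply/differentiable_continuous; rewrite -derivable1_diffP; exact: dF.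
rewrite (@continuous_FTC2 _ _ (fun x => (m+1)^-1 * x `^ (m+1))) //.
- rewrite -EFinB powR1; congr EFin; rewrite /=; field; lra.
- apply: derivable_within_continuous => x; rewrite in_itv/= => /andP[ax _].
  by apply: derivable_powR; rewrite in_itv/= andbT (lt_le_trans a0 ax).
- split.
  + move=> x; rewrite in_itv/= => /andP[ax _]; apply: dF; exact: lt_trans ax.
  + by apply: cvg_at_right_filter; apply: cF.
  + by apply: cvg_at_left_filter; apply: cF; lra.
- move=> x; rewrite in_itv/= => /andP[ax _].
  have x0 : 0 < x by exact: lt_trans ax.
  rewrite derive1Ml; last by apply: derivable_powR; rewrite in_itv/= andbT.
  rewrite powR_derive1 ?in_itv/= ?andbT// mulrA mulVf ?gt_eqF// mul1r.
  by congr powR; ring.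
Qed.

Lemma int01_powR (m : R) : -1 < m ->
  mu.-integrable `]0, 1%R] (fun x => (x `^ m)%:E).
Proof.
move=> m1.
have m10 : 0 < m + 1 by lra.
apply/integrableP; split.
  by apply/measurable_EFinP; apply: measurable_funTS; exact: measurable_powR.
under eq_integral => x _ do rewrite /= ger0_norm ?powR_ge0//.
pose F := fun n : nat => [set` `[(n.+2%:R)^-1, 1%R]] : set R.
have UF : `]0, 1%R]%classic = \bigcup_n F n.
  apply/seteqP; split => x /=.
    rewrite in_itv/= => /andP[x0 x1].
    exists (Num.truncn (x^-1)) => //=.
    rewrite /F/= in_itv/= x1 andbT.
    rewrite -[x in _ <= x]invrK lef_pV2 ?posrE ?invr_gt0 ?ltr0n//.
    apply: le_trans (ltW (truncnS_gt _)) _.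
    by rewrite ler_nat.
  move=> [n _]; rewrite /F/= !in_itv/= => /andP[nx ->]; rewrite andbT.
  by apply: lt_le_trans nx; rewrite invr_gt0.
have nd : {homo F : n k / (n <= k)%N >-> (n <= k)%O}.
  apply/nondecreasing_seqP => n; rewrite subsetEset => x; rewrite /F/= !in_itv/= => /andP[nx ->].
  rewrite andbT; apply: le_trans nx.
  by rewrite lef_pV2 ?posrE ?ltr0n// ler_nat.
have H : (\int[mu]_(x in F i) (x `^ m)%:E)%E @[i --> \oo] -->
    (\int[mu]_(x in \bigcup_i F i) (x `^ m)%:E)%E.
  apply: ge0_nondecreasing_set_cvg_integral => //.
  - by move=> i; exact: measurable_itv.
  - move=> i; apply/measurable_EFinP; apply: measurable_funTS; exact: measurable_powR.
  - by move=> i x _; rewrite lee_fin powR_ge0.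
rewrite UF -(cvg_lim _ H) //.
apply: (@le_lt_trans _ _ ((m+1)^-1)%:E); last exact: ltry.
apply: lime_le; first by apply/cvg_ex; eexists; exact: H.
apply: nearW => n; rewrite /F FTC_powR//; last first.
  by rewrite invf_lt1 ?ltr0n// ltr1n.
rewrite lee_fin ler_pdivrMr // mulVf ?gt_eqF // gerBl powR_ge0 //.
Qed.

Lemma poly_bound (p : {poly R}) (x : R) : 0 <= x ->
  `|p.[x]| <= (\sum_(i < size p) `|p`_i|) * (1 + x ^+ size p).
Proof.
move=> x0; rewrite horner_coef mulr_suml.
apply: le_trans (ler_norm_sum _ _ _) _.
apply: ler_sum => i _; rewrite normrM normrX (ger0_norm x0).
apply: ler_wpM2l => //.
have [x1|x1] := leP x 1.
  by apply: (le_trans (exprn_ile1 i x0 x1)); rewrite lerDl exprn_ge0.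
have h : x ^+ i <= x ^+ size p by apply: ler_weXn2l; [exact: ltW | exact: ltnW].
by apply: (le_trans h); rewrite lerDr.
Qed.

Lemma xn_exp (c : R) (n : nat) : 0 < c ->
  exists C, 0 <= C /\ forall x, 0 <= x -> x ^+ n <= C * expR (c * x).
Proof.
move=> c0; case: n => [|k].
  exists 1; split => // x x0; rewrite expr0 mul1r -expR0 ler_expR mulr_ge0 //; exact: ltW.
exists ((k.+1)`!%:R / c ^+ k.+1); split.
  by rewrite divr_ge0 // exprn_ge0 // ltW.
move=> x x0.
have cx0 : 0 <= c * x by rewrite mulr_ge0 // ltW.
have := expR_ge1Dxn k cx0.
have ck : 0 < c ^+ k.+1 by rewrite exprn_gt0.
have fk : 0 < (k.+1)`!%:R :> R by rewrite ltr0n fact_gt0.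
move=> H.
have H2 : (c * x) ^+ k.+1 / (k.+1)`!%:R <= expR (c * x).
  by apply: le_trans H; rewrite lerDr.
rewrite exprMn in H2.
have -> : x ^+ k.+1 = (c ^+ k.+1 * x ^+ k.+1 / (k.+1)`!%:R) * ((k.+1)`!%:R / c ^+ k.+1).
  by field; rewrite !gt_eqF.
rewrite [X in _ <= X]mulrC; apply: ler_wpM2r => //.
by rewrite divr_ge0 // ltW.
Qed.

Lemma int_expN (c : R) : 0 < c ->
  mu.-integrable `]0, +oo[ (fun x => (expR (- c * x))%:E).
Proof.
move=> c0.
have H := integrable_exponential_pdf c0.
have H1 : mu.-integrable `]0, +oo[ (EFin \o exponential_pdf c).
  by apply: integrableS H => //.
have H2 : mu.-integrable `]0, +oo[ (fun x => (c^-1)%:E * (EFin \o exponential_pdf c) x)%E.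
  by apply: integrableZl => //; exact: measurable_itv.
apply: eq_integrable H2; first exact: measurable_itv.
move=> x; rewrite inE/= in_itv/= andbT => x0.
by rewrite /= exponential_pdfE ?ltW // -EFinM mulrA mulVf ?gt_eqF // mul1r.
Qed.

Lemma integrable_split (f : R -> \bar R) :
  mu.-integrable `]0, 1%R] f -> mu.-integrable `]1%R, +oo[ f ->
  mu.-integrable `]0, +oo[ f.
Proof.
move=> i1 i2.
have -> : `]0, +oo[%classic = `]0, 1%R] `|` `]1%R, +oo[ :> set R.
  apply/seteqP; split => x /=; rewrite !in_itv/= ?andbT.
    by move=> x0; have [x1|x1] := leP x 1; [left; rewrite x0 | right].
  by case=> [/andP[]//|]; apply: lt_trans.
have /integrableP[m1 f1] := i1.
have /integrableP[m2 f2] := i2.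
apply/integrableP; split; first by apply/measurable_funU.
rewrite ge0_integral_setU //.
- exact: lte_add_pinfty.
- apply/measurable_funU => //; split; exact: measurableT_comp.
- apply/disj_setPS => x [] /=; rewrite !in_itv/= => /andP[_ x1] /andP[x2 _].
  by move: (lt_le_trans x2 x1); rewrite ltxx.
Qed.

Lemma measurable_core (b m : R) (p : {poly R}) (D : set R) :
  measurable_fun D (fun x => expR (- b * x) * p.[x] * x `^ m).
Proof.
apply: measurable_funTS; apply: measurable_funM; last exact: measurable_powR.
apply: measurable_funM; apply: continuous_measurable_fun.
  move=> x; apply: continuous_comp; last exact: continuous_expR.
  by apply: continuousM => //; exact: cst_continuous.
exact: continuous_horner.
Qed.

Lemma core (b m : R) (p : {poly R}) : 0 < b -> -1 < m ->
  mu.-integrable `]0, +oo[ (fun x => (expR (- b * x) * p.[x] * x `^ m)%:E).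
Proof.
move=> b0 m1.
set S := \sum_(i < size p) `|p`_i|.
have S0 : 0 <= S by apply: sumr_ge0 => i _.
have mf := measurable_core b m p.
apply: integrable_split.
- have Hg : mu.-integrable `]0, 1%R] (fun x => (2 * S)%:E * (x `^ m)%:E)%E.
    by apply: integrableZl; [exact: measurable_itv | exact: int01_powR].
  apply: (le_integrable _ _ _ Hg).
  + exact: measurable_itv.
  + by apply/measurable_EFinP; apply: mf.
  + move=> x /=; rewrite in_itv/= => /andP[x0 x1].
    rewrite lee_fin [X in _ <= X]ger0_norm ?mulr_ge0 ?powR_ge0 //.
    rewrite !normrM (ger0_norm (powR_ge0 x m)) (ger0_norm (expR_ge0 _)).
    apply: ler_wpM2r; first exact: powR_ge0.
    have e1 : expR (- b * x) <= 1 by rewrite expR_le1 mulNr oppr_le0 mulr_ge0 // ltW.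
    have pb : `|p.[x]| <= 2 * S.
      apply: (le_trans (poly_bound p _ (ltW x0))).
      rewrite mulrC ler_wpM2r //.
      by rewrite [2]/(1 + 1) lerD2l exprn_ile1 // ltW.
    rewrite -[2 * S]mul1r; apply: ler_pM => //; exact: expR_ge0.
- have b20 : 0 < b / 2 by lra.
  have [C [C0 HC]] := @xn_exp (b / 2) (size p + (Num.truncn `|m|).+1)%N b20.
  have ie := @int_expN (b / 2) b20.
  have ie2 : mu.-integrable `]1%R, +oo[ (fun x => (expR (- (b / 2) * x))%:E).
    apply: integrableS ie => //.
    by move=> x /=; rewrite !in_itv/= !andbT; apply: lt_trans.
  have Hg : mu.-integrable `]1%R, +oo[ (fun x => (2 * S * C)%:E * (expR (- (b / 2) * x))%:E)%E.
    by apply: integrableZl; [exact: measurable_itv | exact: ie2].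
  apply: (le_integrable _ _ _ Hg).
  + exact: measurable_itv.
  + by apply/measurable_EFinP; apply: mf.
  + move=> x /=; rewrite in_itv/= andbT => x1.
    have x0 : 0 < x by apply: lt_trans x1.
    rewrite lee_fin [X in _ <= X]ger0_norm ?mulr_ge0 ?expR_ge0 //.
    rewrite !normrM (ger0_norm (powR_ge0 x m)) (ger0_norm (expR_ge0 _)).
    set M := (Num.truncn `|m|).+1.
    have mM : x `^ m <= x ^+ M.
      rewrite -powR_mulrn ?(ltW x0) //; apply: ler_powR; first exact: ltW.
      apply: (le_trans (real_ler_norm _)); first exact: num_real.
      exact/ltW/truncnS_gt.
    have pb : `|p.[x]| <= 2 * S * x ^+ size p.
      apply: (le_trans (poly_bound p _ (ltW x0))).
      rewrite -/S.
      have : 1 <= x ^+ size p by apply: exprn_ege1; exact: ltW.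
      nra.
    apply: (@le_trans _ _ (expR (- b * x) * (2 * S * x ^+ size p) * x ^+ M)).
      apply: ler_pM; [by rewrite mulr_ge0 ?expR_ge0 | exact: powR_ge0 | | exact: mM].
      by apply: ler_wpM2l => //; exact: expR_ge0.
    have := HC x (ltW x0).
    rewrite exprD => H.
    have -> : expR (- b * x) * (2 * S * x ^+ size p) * x ^+ M =
      (2 * S) * (expR (- b * x) * (x ^+ size p * x ^+ M)) by ring.
    rewrite -[X in _ <= X]mulrA; apply: ler_wpM2l; first by rewrite mulr_ge0.
    have -> : expR (- (b / 2) * x) = expR (- b * x) * expR (b / 2 * x).
      by rewrite -expRD; congr expR; field.
    have -> : C * (expR (- b * x) * expR (b / 2 * x)) =
      expR (- b * x) * (C * expR (b / 2 * x)) by ring.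
    by apply: ler_wpM2l; [exact: expR_ge0 | exact: H].
Qed.

Lemma intZ {h : R -> R} (r : R) :
  mu.-integrable `]0, +oo[ (EFin \o h) ->
  mu.-integrable `]0, +oo[ (EFin \o (fun x => r * h x)).
Proof.
move=> ih.
have H : mu.-integrable `]0, +oo[ (fun x => r%:E * (EFin \o h) x)%E.
  by apply: integrableZl => //; exact: measurable_itv.
apply: eq_integrable H; first exact: measurable_itv.
by move=> x _ /=; rewrite EFinM.
Qed.

Lemma intD {h1 h2 : R -> R} :
  mu.-integrable `]0, +oo[ (EFin \o h1) ->
  mu.-integrable `]0, +oo[ (EFin \o h2) ->
  mu.-integrable `]0, +oo[ (EFin \o (fun x => h1 x + h2 x)).
Proof.
move=> i1 i2.
have H : mu.-integrable `]0, +oo[ ((EFin \o h1) \+ (EFin \o h2))%E.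
  by apply: integrableD => //; exact: measurable_itv.
apply: eq_integrable H; first exact: measurable_itv.
by move=> x _ /=; rewrite EFinD.
Qed.

Lemma L2prod {m : R} {f g : R -> R} : in_L2w m f -> in_L2w m g ->
  mu.-integrable `]0, +oo[ (EFin \o (fun x => f x * g x * x `^ m)).
Proof.
move=> [mf if2] [mg ig2].
have H := intD if2 ig2.
apply: (le_integrable _ _ _ H); first exact: measurable_itv.
  apply/measurable_EFinP; apply: measurable_funM; last first.
    by apply: measurable_funTS; exact: measurable_powR.
  exact: measurable_funM.
move=> x _ /=; rewrite lee_fin.
have w0 := powR_ge0 x m.
rewrite [X in _ <= X]ger0_norm; last first.
  by rewrite addr_ge0 // mulr_ge0 // sqr_ge0.
rewrite !normrM (ger0_norm w0) -mulrDl ler_wpM2r //.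
have e1 : f x ^+ 2 = `|f x| ^+ 2 by rewrite real_normK ?num_real.
have e2 : g x ^+ 2 = `|g x| ^+ 2 by rewrite real_normK ?num_real.
rewrite e1 e2.
have := normr_ge0 (f x); have := normr_ge0 (g x).
nra.
Qed.

Lemma L2lin {m : R} {f g : R -> R} (c : R) : in_L2w m f -> in_L2w m g ->
  in_L2w m (fun x => f x + c * g x).
Proof.
move=> Lf Lg.
have Hfg := L2prod Lf Lg.
case: Lf => [mf if2]; case: Lg => [mg ig2].
split.
  apply: measurable_funD => //; apply: measurable_funM => //.
have H := intD (intD if2 (intZ (2 * c) Hfg)) (intZ (c ^+ 2) ig2).
apply: eq_integrable H; first exact: measurable_itv.
by move=> x _ /=; congr EFin; ring.
Qed.

Lemma CS {m : R} {f g : R -> R} : in_L2w m f -> in_L2w m g ->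
  `| Rintegral mu `]0, +oo[ (fun x => f x * g x * x `^ m) |
  <= wnorm m f * wnorm m g.
Proof.
move=> Lf Lg.
have Hfg := L2prod Lf Lg.
have [mf if2] := Lf; have [mg ig2] := Lg.
rewrite /wnorm.
set A := Rintegral mu _ (fun x => f x ^+ 2 * x `^ m).
set B := Rintegral mu _ (fun x => f x * g x * x `^ m).
set C := Rintegral mu _ (fun x => g x ^+ 2 * x `^ m).
have A0 : 0 <= A by apply: Rintegral_ge0 => x _; rewrite mulr_ge0 ?sqr_ge0 ?powR_ge0.
have C0 : 0 <= C by apply: Rintegral_ge0 => x _; rewrite mulr_ge0 ?sqr_ge0 ?powR_ge0.
have quad : forall t, 0 <= A + 2 * t * B + t ^+ 2 * C.
  move=> t.
  have -> : A + 2 * t * B + t ^+ 2 * C =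
      Rintegral mu `]0, +oo[ (fun x => (f x ^+ 2 * x `^ m + (2 * t) * (f x * g x * x `^ m))
                                     + t ^+ 2 * (g x ^+ 2 * x `^ m)).
    rewrite RintegralD //; last 2 first.
    - exact: intD if2 (intZ _ Hfg).
    - exact: intZ _ ig2.
    rewrite RintegralD //; last exact: intZ _ Hfg.
    by rewrite !RintegralZl //.
  apply: Rintegral_ge0 => x _.
  have -> : f x ^+ 2 * x `^ m + 2 * t * (f x * g x * x `^ m) + t ^+ 2 * (g x ^+ 2 * x `^ m)
    = (f x + t * g x) ^+ 2 * x `^ m by ring.
  by rewrite mulr_ge0 ?sqr_ge0 ?powR_ge0.
have key : B ^+ 2 <= A * C.
  have [C00|Cpos] : C = 0 \/ 0 < C.
    by move: C0; rewrite le_eqVlt => /orP[/eqP <-|->]; [left|right].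
  - have [->|hB] := eqVneq B 0; first by rewrite expr0n /= mulr_ge0.
    exfalso.
    have h := quad (- (A + 1) / (2 * B)).
    have e : 2 * (- (A + 1) / (2 * B)) * B = - (A + 1).
      by field.
    rewrite C00 mulr0 addr0 e in h; lra.
  - have h := quad (- B / C).
    have e : A + 2 * (- B / C) * B + (- B / C) ^+ 2 * C = A - B ^+ 2 / C.
      by field; rewrite gt_eqF.
    rewrite e subr_ge0 ler_pdivrMr // in h.
rewrite -sqrtrM // -sqrtr_sqr ler_sqrt //; exact: mulr_ge0.
Qed.

Lemma hat_mul (b : R) (q1 q2 : {poly R}) (x : R) :
  hat_fun b q1 x * hat_fun b q2 x = expR (- b * x) * (q1 * q2).[x].
Proof.
rewrite /hat_fun hornerM.
have -> : expR (- b * x) = expR (- b * x / 2) * expR (- b * x / 2).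
  by rewrite -expRD; congr expR; field.
ring.
Qed.

Lemma hat_L2 (b m : R) (q : {poly R}) : 0 < b -> -1 < m -> in_L2w m (hat_fun b q).
Proof.
move=> b0 m1; split.
  rewrite /hat_fun; apply: measurable_funTS.
  apply: measurable_funM; apply: continuous_measurable_fun; last exact: continuous_horner.
  move=> x; apply: continuous_comp; last exact: continuous_expR.
  apply: continuousM; [apply: continuousM => //; exact: cst_continuous | exact: cst_continuous].
have H := @core b m (q * q) b0 m1.
apply: eq_integrable H; first exact: measurable_itv.
by move=> x _ /=; rewrite expr2 hat_mul.
Qed.
End S.

Theorem mainTheorem12 (R : realType) (mu beta : R) (N : nat) (Z : quad_kind)
    (xi w : 'I_N.+1 -> R) (phi1 phi2 : R -> R) (q1 q2 : {poly R}) :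
  -1 < mu -> 0 < beta -> (1 <= N)%N ->
  is_nodes Z mu beta N xi ->
  is_weights Z mu beta N xi w ->
  {within `[0, +oo[, continuous phi1} ->
  {within `[0, +oo[, continuous phi2} ->
  in_L2w mu phi1 -> in_L2w mu phi2 ->
  is_interp beta N xi phi1 q1 -> is_interp beta N xi phi2 q2 ->
  let phi := fun x => phi1 x * phi2 x in
  let psi1 := hat_fun beta q1 in
  let psi2 := hat_fun beta q2 in
  `| Rintegral lebesgue_measure `]0, +oo[ (fun x => phi x * x `^ mu)
     - \sum_(j < N.+1) phi (xi j) * w j |
  <= (wnorm mu phi1 + wnorm mu phi2 + wnorm mu psi1 + wnorm mu psi2)
     * (wnorm mu (fun x => phi1 x - psi1 x) + wnorm mu (fun x => phi2 x - psi2 x)).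
Proof.
move=> m1 b0 N1 _ wts _ _ L1 L2 [sq1 I1] [sq2 I2]; cbv zeta.
set psi1 := hat_fun beta q1; set psi2 := hat_fun beta q2.
have P1 : in_L2w mu psi1 by exact: hat_L2.
have P2 : in_L2w mu psi2 by exact: hat_L2.
have D1 : in_L2w mu (fun x => phi1 x - psi1 x).
  have -> : (fun x => phi1 x - psi1 x) = (fun x => phi1 x + (-1) * psi1 x).
    by apply/funext => x; ring.
  exact: L2lin.
have D2 : in_L2w mu (fun x => phi2 x - psi2 x).
  have -> : (fun x => phi2 x - psi2 x) = (fun x => phi2 x + (-1) * psi2 x).
    by apply/funext => x; ring.
  exact: L2lin.
have Ssum : \sum_(j < N.+1) phi1 (xi j) * phi2 (xi j) * w j =
    Rintegral lebesgue_measure `]0, +oo[ (fun x => psi1 x * psi2 x * x `^ mu).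
  transitivity (\sum_(j < N.+1) expR (- beta * xi j) * (q1 * q2).[xi j] * w j).
    by apply: eq_bigr => j _; rewrite -I1 -I2 hat_mul.
  rewrite -wts; last first.
    apply: leq_trans (size_mul_leq _ _) _.
    rewrite -subn1; apply: leq_trans (leq_sub2r 1 (leq_add sq1 sq2)) _.
    case: Z {wts} => /=; lia.
  by apply: eq_Rintegral => x _; rewrite /psi1 /psi2 hat_mul.
rewrite Ssum -RintegralB //; last 2 first.
- exact: L2prod L1 L2.
- exact: L2prod P1 P2.
have -> : Rintegral lebesgue_measure `]0, +oo[
    (fun x => phi1 x * phi2 x * x `^ mu - psi1 x * psi2 x * x `^ mu) =
  Rintegral lebesgue_measure `]0, +oo[ (fun x => (phi1 x - psi1 x) * phi2 x * x `^ mu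
                                  + psi1 x * (phi2 x - psi2 x) * x `^ mu).
  by apply: eq_Rintegral => x _; ring.
rewrite RintegralD //; last 2 first.
- exact: L2prod D1 L2.
- exact: L2prod P1 D2.
apply: (le_trans (ler_normD _ _)).
have h1 := CS _ D1 L2.
have h2 := CS _ P1 D2.
have n1 : 0 <= wnorm mu phi1 by exact: sqrtr_ge0.
have n2 : 0 <= wnorm mu phi2 by exact: sqrtr_ge0.
have n3 : 0 <= wnorm mu psi1 by exact: sqrtr_ge0.
have n4 : 0 <= wnorm mu psi2 by exact: sqrtr_ge0.
have n5 : 0 <= wnorm mu (fun x => phi1 x - psi1 x) by exact: sqrtr_ge0.
have n6 : 0 <= wnorm mu (fun x => phi2 x - psi2 x) by exact: sqrtr_ge0.
nra.
Qed.
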